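(* Let $\mathcal{L}$ be a set of lines of $\mathsf{PG}(7,q^3)$ satisfying (Pt): every point of $\mathsf{PG}(7,q^3)$ is incident with $0$ or $q+1$ elements of $\mathcal{L}$; (Pl): every plane contains $0$, $1$ or $q+1$ elements of $\mathcal{L}$; and (Sd): every solid contains $0,1,q+1$ or $2q+1$ elements of $\mathcal{L}$. Then no three lines of $\mathcal{L}$ form a triangle and no four lines of $\mathcal{L}$ form a quadrangle.
   Context: A triangle (resp. quadrangle) is a set of $3$ (resp. $4$) lines $L_1,\dots,L_k$ such that $L_i$ meets $L_{i+1}$ (indices mod $k$) and the $k$ intersection points are pairwise distinct. *)

(* Defs.v *)
From HB Require Import structures.
From mathcomp Require Import all_boot all_order all_algebra all_field.
Set Implicit Arguments. Unset Strict Implicit. Unset Printing Implicit Defensive.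
Import GRing.Theory.
Local Open Scope ring_scope.

(* Projective space PG(n-1, F): subspaces of the vector space 'rV[F]_n.
   Points / lines / planes / solids are the subspaces of (vector) dimension
   1 / 2 / 3 / 4. *)
Section PG.
Variables (F : fieldType) (n : nat).
Notation sub := {vspace 'rV[F]_n}.

Definition is_point (P : sub) : bool := \dim P == 1%N.
Definition is_line (l : sub) : bool := \dim l == 2%N.
Definition is_plane (p : sub) : bool := \dim p == 3%N.
Definition is_solid (s : sub) : bool := \dim s == 4%N.

Definition meets (l m : sub) : bool := \dim (l :&: m) == 1%N.

(* number of elements of the set of lines L (given duplicate-free)
   incident with / contained in a subspace *)
Definition nb_through (L : seq sub) (P : sub) : nat := count (fun l => (P <= l)%VS) L.
Definition nb_in (L : seq sub) (S : sub) : nat := count (fun l => (l <= S)%VS) L.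

Definition triangle (l1 l2 l3 : sub) : Prop :=
  [/\ meets l1 l2, meets l2 l3, meets l3 l1 &
    [/\ (l1 :&: l2)%VS != (l2 :&: l3)%VS,
        (l1 :&: l2)%VS != (l3 :&: l1)%VS &
        (l2 :&: l3)%VS != (l3 :&: l1)%VS]].

Definition quadrangle (l1 l2 l3 l4 : sub) : Prop :=
  [/\ meets l1 l2, meets l2 l3, meets l3 l4, meets l4 l1 &
    uniq [:: (l1 :&: l2)%VS; (l2 :&: l3)%VS; (l3 :&: l4)%VS; (l4 :&: l1)%VS]].
End PG.

(* Main.v *)
Require Import Defs.
From HB Require Import structures.
From mathcomp Require Import all_boot all_order all_algebra all_field.
From mathcomp Require Import zify.
Set Implicit Arguments. Unset Strict Implicit.

Lemma count_in_le (T : eqType) (P Q : pred T) (s : seq T) :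
  {in s, forall x, P x -> Q x} -> count P s <= count Q s.
Proof.
elim: s => [//|y s IH] H /=.
have Hy := H y (mem_head _ _).
have Hs : {in s, forall x, P x -> Q x} by move=> x xs; apply: H; rewrite inE xs orbT.
have := IH Hs. case: (P y) Hy; case: (Q y) => //= Hy; try lia.

Qed.

Lemma count_sub_eq (T : eqType) (P Q : pred T) (s : seq T) :
  {in s, forall x, P x -> Q x} -> count Q s <= count P s ->
  {in s, forall x, Q x -> P x}.
Proof.
elim: s => [//|y s IH] H /= Hc x.
have Hy := H y (mem_head _ _).
have Hs : {in s, forall x, P x -> Q x} by move=> z zs; apply: H; rewrite inE zs orbT.
have Hle := count_in_le Hs.
rewrite inE => /orP [/eqP ->|xs].
- move=> Qy; move: Hc Hy; rewrite Qy; case: (P y) => //=; lia.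
- apply: IH => //; move: Hc Hy; case: (P y); case: (Q y) => //= ; try lia.
Qed.

Lemma count_le_size (T : eqType) (P : pred T) (s r : seq T) :
  uniq s -> {in s, forall x, P x -> x \in r} -> count P s <= size r.
Proof.
move=> us H; rewrite -size_filter; apply: uniq_leq_size; first exact: filter_uniq.
by move=> x; rewrite mem_filter => /andP [Px xs]; apply: H.
Qed.

Lemma count_ge2 (T : eqType) (P : pred T) (s : seq T) a b :
  uniq s -> a \in s -> b \in s -> a != b -> P a -> P b -> 2 <= count P s.
Proof.
move=> us as_ bs ab Pa Pb; rewrite -size_filter.
have -> : 2 = size [:: a; b] by [].
apply: uniq_leq_size; first by rewrite /= inE ab.
by move=> x; rewrite !inE => /orP [/eqP ->|/eqP ->]; rewrite mem_filter ?Pa ?Pb.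
Qed.

Lemma sub_dim_eq (K : fieldType) (vT : vectType K) (U V : {vspace vT}) :
  (U <= V)%VS -> \dim V <= \dim U -> U = V.
Proof. by move=> h1 h2; apply/eqP; rewrite eqEdim h1 h2. Qed.

Lemma D4 (K : fieldType) (vT : vectType K) (X Y a b : {vspace vT}) :
  \dim X = 3 -> ~~ (X <= Y)%VS -> \dim a = 2 -> \dim b = 2 ->
  (a <= X)%VS -> (a <= Y)%VS -> (b <= X)%VS -> (b <= Y)%VS -> a = b.
Proof.
move=> dX nXY da db aX aY bX bY.
have h : \dim (X :&: Y) <= 2.
  rewrite leqNgt; apply/negP => h; move/negP: nXY; apply.
  have e : (X :&: Y)%VS = X by apply: sub_dim_eq; [exact: capvSl | lia].
  by rewrite -e capvSr.
have ea : a = (X :&: Y)%VS by apply: sub_dim_eq; [rewrite subv_cap aX aY | lia].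
have eb : b = (X :&: Y)%VS by apply: sub_dim_eq; [rewrite subv_cap bX bY | lia].
by rewrite ea eb.
Qed.

Lemma two_pts_sub (K : fieldType) (vT : vectType K) (A B l X : {vspace vT}) :
  \dim A = 1 -> \dim B = 1 -> A != B -> \dim l = 2 ->
  (A <= l)%VS -> (B <= l)%VS -> (A <= X)%VS -> (B <= X)%VS -> (l <= X)%VS.
Proof.
move=> dA dB nAB dl Al Bl AX BX.
have hc : \dim (A :&: B) = 0.
  have := dimvS (capvSl A B); rewrite dA.
  case e: (\dim (A :&: B)) => [//|[|//]] _.
  have e1 : (A :&: B)%VS = A by apply: sub_dim_eq; [exact: capvSl | lia].
  have e2 : (A :&: B)%VS = B by apply: sub_dim_eq; [exact: capvSr | lia].
  by move: nAB; rewrite -{1}e1 e2 eqxx.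
have hs := dimv_sum_cap A B.
have e : (A + B)%VS = l by apply: sub_dim_eq; [rewrite subv_add Al Bl | lia].
by rewrite -e subv_add AX BX.
Qed.

Lemma pt_eq (K : fieldType) (vT : vectType K) (A B : {vspace vT}) :
  \dim A = 1 -> \dim B = 1 -> (A <= B)%VS -> A = B.
Proof. by move=> dA dB h; apply: sub_dim_eq => //; rewrite dA dB. Qed.

Lemma lemU (T : eqType) (s : seq T) (A B C : pred T) q x0 :
  uniq s -> count A s = q.+1 -> count B s = q.+1 ->
  {in s, forall x, A x -> C x} -> {in s, forall x, B x -> C x} ->
  {in s, forall x, A x -> B x -> x = x0} -> count C s <= (2*q).+1 ->
  {in s, forall x, C x -> A x || B x}.
Proof.
move=> us cA cB AC BC ABx cC.
apply: (@count_sub_eq _ (predU A B)).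
  by move=> x xs /orP [/AC|/BC]; apply.
have h1 := count_predUI A B s.
have h2 : count (predI A B) s <= size [:: x0].
  apply: count_le_size => // x xs /andP [Ax Bx]; by rewrite inE (ABx x xs Ax Bx).
rewrite /= in h2. lia.
Qed.

Lemma plane_count (F : fieldType) (n q : nat) (L : seq {vspace 'rV[F]_n})
  (HLu : uniq L)
  (Pl : forall S : {vspace 'rV[F]_n}, is_plane S -> nb_in L S \in [:: 0%N; 1%N; q.+1])
  S a b : \dim S = 3 -> a \in L -> b \in L -> a != b -> (a <= S)%VS -> (b <= S)%VS ->
  nb_in L S = q.+1.
Proof.
move=> dS aL bL ab aS bS.
have h2 : 2 <= nb_in L S by apply: (count_ge2 HLu aL bL ab).
have := Pl S (introT eqP dS); rewrite !inE.
by case/or3P => /eqP e; rewrite e in h2 *.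
Qed.

Lemma solid_count (F : fieldType) (n q : nat) (L : seq {vspace 'rV[F]_n})
  (Sd : forall S : {vspace 'rV[F]_n}, is_solid S ->
          nb_in L S \in [:: 0%N; 1%N; q.+1; (2 * q).+1])
  S : \dim S = 4 -> nb_in L S <= (2 * q).+1.
Proof.
move=> dS; have := Sd S (introT eqP dS); rewrite !inE.
case/or4P => /eqP ->; lia.
Qed.


Ltac tidy := repeat match goal with
  | H : ?T |- _ => lazymatch T with
                  | @eq nat _ _ => fail
                  | is_true (leq _ _) => fail
                  | _ => clear H
                  end
  end.
Ltac slia := tidy; lia.

Lemma lemA (F : fieldType) (n q : nat) (L : seq {vspace 'rV[F]_n})
  (HLu : uniq L) (HLl : forall l, l \in L -> is_line l)
  (Pl : forall S : {vspace 'rV[F]_n}, is_plane S -> nb_in L S \in [:: 0%N; 1%N; q.+1])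
  (Sd : forall S : {vspace 'rV[F]_n}, is_solid S ->
          nb_in L S \in [:: 0%N; 1%N; q.+1; (2 * q).+1])
  (hq : 1 < q) l1 l2 m :
  l1 \in L -> l2 \in L -> meets l1 l2 -> m \in L -> (l1 :&: l2 <= m)%VS ->
  (m <= l1 + l2)%VS.
Proof.
move=> l1L l2L mt mL Rm.
apply/negPn/negP => nm.
have d1 : \dim l1 = 2 by apply/eqP; exact: HLl.
have d2 : \dim l2 = 2 by apply/eqP; exact: HLl.
have dm : \dim m = 2 by apply/eqP; exact: HLl.
have dR : \dim (l1 :&: l2) = 1 by apply/eqP.
set R := (l1 :&: l2)%VS in dR Rm.
have R1 : (R <= l1)%VS by exact: capvSl.
have R2 : (R <= l2)%VS by exact: capvSr.
set pi := (l1 + l2)%VS in nm *.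
have l1p : (l1 <= pi)%VS by exact: addvSl.
have l2p : (l2 <= pi)%VS by exact: addvSr.
have dpi : \dim pi = 3 by have := dimv_sum_cap l1 l2; rewrite -/pi d1 d2 dR; slia.
have cap1 : forall X : {vspace 'rV[F]_n}, (R <= X)%VS -> ~~ (m <= X)%VS -> \dim (X :&: m) = 1.
  move=> X RX nmX.
  have h1 := dimvS (capvSr X m).
  have h2 : (R <= X :&: m)%VS by rewrite subv_cap RX Rm.
  have h3 := dimvS h2.
  case e: (\dim (X :&: m)) => [|[|[|k]]]; rewrite e dR dm in h1 h3 *; try slia.
  have e2 : (X :&: m)%VS = m by apply: sub_dim_eq; [exact: capvSr | rewrite e dm].
  by move/negP: nmX; rewrite -e2 capvSl.
have nm1 : ~~ (m <= l1)%VS by apply: contra nm => h; exact: subv_trans h l1p.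
have nm2 : ~~ (m <= l2)%VS by apply: contra nm => h; exact: subv_trans h l2p.
set sg := (pi + m)%VS.
have dsg : \dim sg = 4.
  have := dimv_sum_cap pi m; rewrite -/sg dpi dm (cap1 pi (subv_trans R1 l1p) nm); slia.
set tau := (l1 + m)%VS.
have dtau : \dim tau = 3.
  have := dimv_sum_cap l1 m; rewrite -/tau d1 dm (cap1 l1 R1 nm1); slia.
set rho := (l2 + m)%VS.
have drho : \dim rho = 3.
  have := dimv_sum_cap l2 m; rewrite -/rho d2 dm (cap1 l2 R2 nm2); slia.
have l1m : l1 != m by apply/eqP => e; move/negP: nm; rewrite -e l1p.
have l2m : l2 != m by apply/eqP => e; move/negP: nm; rewrite -e l2p.
have l12 : l1 != l2.
  apply/eqP => e; move: dR; rewrite /R e capvv d2 //.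
have pisg : (pi <= sg)%VS by exact: addvSl.
have msg : (m <= sg)%VS by exact: addvSr.
have tausg : (tau <= sg)%VS by rewrite subv_add (subv_trans l1p pisg) msg.
have rhosg : (rho <= sg)%VS by rewrite subv_add (subv_trans l2p pisg) msg.
have mtau : (m <= tau)%VS by exact: addvSr.
have mrho : (m <= rho)%VS by exact: addvSr.
have cpi : nb_in L pi = q.+1 by apply: (plane_count HLu Pl dpi l1L l2L l12).
have ctau : nb_in L tau = q.+1 by apply: (plane_count HLu Pl dtau l1L mL l1m); [exact: addvSl|].
have crho : nb_in L rho = q.+1 by apply: (plane_count HLu Pl drho l2L mL l2m); [exact: addvSl|].
have csg := solid_count Sd dsg.
have ntp : ~~ (tau <= pi)%VS by apply: contra nm => h; exact: subv_trans mtau h.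
have nrp : ~~ (rho <= pi)%VS by apply: contra nm => h; exact: subv_trans mrho h.
have nrt : ~~ (rho <= tau)%VS.
  apply: contra nm => h.
  have l2t : (l2 <= tau)%VS by apply: subv_trans h; exact: addvSl.
  have pt : (pi <= tau)%VS by rewrite subv_add l2t addvSl.
  have e : pi = tau by apply: sub_dim_eq => //; rewrite dpi dtau.
  by rewrite e.
have U := lemU (C := fun l => (l <= sg)%VS) (x0 := l1) HLu cpi ctau
  (fun x _ h => subv_trans h pisg) (fun x _ h => subv_trans h tausg).
have U' : {in L, forall x, (x <= sg)%VS -> (x <= pi)%VS || (x <= tau)%VS}.
  apply: U => //.
  move=> x xL xp xt; apply: (D4 dtau ntp) => //.
  - by apply/eqP; exact: HLl.
  - exact: addvSl.
have : nb_in L rho <= size [:: l2; m].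
  apply: count_le_size => // x xL xr.
  have dx : \dim x = 2 by apply/eqP; exact: HLl.
  case/orP: (U' x xL (subv_trans xr rhosg)) => h.
  - by rewrite (D4 drho nrp dx d2 xr h (addvSl _ _) l2p) mem_head.
  - by rewrite (D4 drho nrt dx dm xr h mrho mtau) !inE eqxx orbT.
rewrite crho /=; slia.
Qed.

Lemma plane_dim (F : fieldType) (n : nat) (l1 l2 : {vspace 'rV[F]_n}) :
  \dim l1 = 2 -> \dim l2 = 2 -> meets l1 l2 -> \dim (l1 + l2) = 3 /\ l1 != l2.
Proof.
move=> d1 d2 /eqP mt; split.
  by have := dimv_sum_cap l1 l2; rewrite d1 d2 mt; move: (\dim _) => k; lia.
by apply/eqP => e; move: mt; rewrite e capvv d2.
Qed.

Lemma lemB (F : fieldType) (n q : nat) (L : seq {vspace 'rV[F]_n})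
  (HLu : uniq L) (HLl : forall l, l \in L -> is_line l)
  (Pt : forall P : {vspace 'rV[F]_n}, is_point P -> nb_through L P \in [:: 0%N; q.+1])
  (Pl : forall S : {vspace 'rV[F]_n}, is_plane S -> nb_in L S \in [:: 0%N; 1%N; q.+1])
  (Sd : forall S : {vspace 'rV[F]_n}, is_solid S ->
          nb_in L S \in [:: 0%N; 1%N; q.+1; (2 * q).+1])
  (hq : 1 < q) l1 l2 m :
  l1 \in L -> l2 \in L -> meets l1 l2 -> m \in L -> (m <= l1 + l2)%VS ->
  (l1 :&: l2 <= m)%VS.
Proof.
move=> l1L l2L mt mL mp.
have d1 : \dim l1 = 2 by apply/eqP; exact: HLl.
have d2 : \dim l2 = 2 by apply/eqP; exact: HLl.
have [dp l12] := plane_dim d1 d2 mt.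
apply: (@count_sub_eq _ (fun l => (l1 :&: l2 <= l)%VS) (fun l => (l <= l1 + l2)%VS) L _ _ m mL mp).
  by move=> x xL h; apply: (lemA HLu HLl Pl Sd hq l1L l2L mt xL h).
have c1 : nb_in L (l1 + l2)%VS = q.+1.
  by apply: (plane_count HLu Pl dp l1L l2L l12); [exact: addvSl | exact: addvSr].
have c2 : nb_through L (l1 :&: l2)%VS = q.+1.
  have := Pt _ mt; rewrite !inE => /orP [/eqP e|/eqP //].
  have : 0 < nb_through L (l1 :&: l2)%VS.
    rewrite /nb_through -has_count; apply/hasP; exists l1 => //; exact: capvSl.
  by rewrite e.
by move: c1 c2; rewrite /nb_in /nb_through => -> ->.
Qed.

Lemma uniq4 (T : eqType) (a b c d : T) : uniq [:: a; b; c; d] ->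
  (a != b /\ a != c /\ a != d) /\ (b != c /\ b != d /\ c != d).
Proof.
rewrite /= !inE !negb_or => /and4P [/and3P [? ? ?] /andP [? ?] ? _].
by do !split.
Qed.

Theorem mainTheorem17 (p k q : nat) (F : finFieldType)
  (Hp : prime p) (Hk : (0 < k)%N) (Hq : q = (p ^ k)%N)
  (HF : #|F| = (q ^ 3)%N)
  (L : seq {vspace 'rV[F]_8})
  (HLuniq : uniq L)
  (HLlines : forall l, l \in L -> is_line l)
  (Pt : forall P : {vspace 'rV[F]_8}, is_point P ->
          nb_through L P \in [:: 0%N; q.+1])
  (Pl : forall S : {vspace 'rV[F]_8}, is_plane S ->
          nb_in L S \in [:: 0%N; 1%N; q.+1])
  (Sd : forall S : {vspace 'rV[F]_8}, is_solid S ->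
          nb_in L S \in [:: 0%N; 1%N; q.+1; (2 * q).+1]) :
  (~ exists l1 l2 l3, [/\ l1 \in L, l2 \in L, l3 \in L & triangle l1 l2 l3]) /\
  (~ exists l1 l2 l3 l4,
       [/\ l1 \in L, l2 \in L, l3 \in L, l4 \in L & quadrangle l1 l2 l3 l4]).
Proof.
have hq : 1 < q.
  rewrite Hq; apply: leq_trans (prime_gt1 Hp) _.
  by rewrite -{1}(expn1 p); apply: leq_pexp2l => //; exact: prime_gt0.
have B := lemB HLuniq HLlines Pt Pl Sd hq.
have dl : forall l, l \in L -> \dim l = 2 by move=> l lL; apply/eqP; exact: HLlines.
split.
  move=> [l1 [l2 [l3 [l1L l2L l3L [m12 m23 m31 [n1 n2 n3]]]]]].
  have l3p : (l3 <= l1 + l2)%VS.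
    apply: (two_pts_sub (eqP m23) (eqP m31) n3 (dl _ l3L)).
    - exact: capvSr.
    - exact: capvSl.
    - exact: subv_trans (capvSl _ _) (addvSr _ _).
    - exact: subv_trans (capvSr _ _) (addvSl _ _).
  have h := B _ _ _ l1L l2L m12 l3L l3p.
  have h2 : (l1 :&: l2 <= l2 :&: l3)%VS by rewrite subv_cap capvSr h.
  by move/negP: n1; apply; apply/eqP; exact: pt_eq (eqP m12) (eqP m23) h2.
move=> [l1 [l2 [l3 [l4 [l1L l2L l3L l4L [m12 m23 m34 m41 U]]]]]].
have [[n12 [n13 n14]] [n23 [n24 n34]]] := uniq4 U.
have d1 := dl _ l1L; have d2 := dl _ l2L; have d3 := dl _ l3L; have d4 := dl _ l4L.
have [dp1 l12] := plane_dim d1 d2 m12.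
have [dp2 l23] := plane_dim d2 d3 m23.
set P12 := (l1 :&: l2)%VS in n12 n13 n14 m12 *.
set P23 := (l2 :&: l3)%VS in n12 n23 n24 m23 *.
set P34 := (l3 :&: l4)%VS in n13 n23 n34 m34 *.
set P41 := (l4 :&: l1)%VS in n14 n24 n34 m41 *.
set pi1 := (l1 + l2)%VS in dp1 *.
set pi2 := (l2 + l3)%VS in dp2 *.
have l1p : (l1 <= pi1)%VS by exact: addvSl.
have l2p : (l2 <= pi1)%VS by exact: addvSr.
have nl3 : ~~ (l3 <= pi1)%VS.
  apply/negP => h; have h1 := B _ _ _ l1L l2L m12 l3L h.
  have h2 : (P12 <= P23)%VS by rewrite subv_cap capvSr h1.
  by move/negP: n12; apply; apply/eqP; exact: pt_eq (eqP m12) (eqP m23) h2.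
set sg := (pi1 + l3)%VS.
have dcap : \dim (pi1 :&: l3) = 1.
  have h1 := dimvS (capvSr pi1 l3).
  have h2 : (P23 <= pi1 :&: l3)%VS by rewrite subv_cap (subv_trans (capvSl _ _) l2p) capvSr.
  have h3 := dimvS h2.
  rewrite (eqP m23) d3 in h3 h1.
  case e: (\dim (pi1 :&: l3)) => [|[|[|j]]]; rewrite e in h1 h3 *; try by [].
  have e2 : (pi1 :&: l3)%VS = l3 by apply: sub_dim_eq; [exact: capvSr | rewrite e d3].
  by move/negP: nl3; rewrite -e2 capvSl.
have dsg : \dim sg = 4.
  by have := dimv_sum_cap pi1 l3; rewrite -/sg dp1 d3 dcap; move: (\dim sg) => j h; clear -h; lia.
have p1sg : (pi1 <= sg)%VS by exact: addvSl.
have l3sg : (l3 <= sg)%VS by exact: addvSr.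
have p2sg : (pi2 <= sg)%VS by rewrite subv_add (subv_trans l2p p1sg) l3sg.
have l3p2 : (l3 <= pi2)%VS by exact: addvSr.
have l2p2 : (l2 <= pi2)%VS by exact: addvSl.
have c1 : nb_in L pi1 = q.+1 by apply: (plane_count HLuniq Pl dp1 l1L l2L l12).
have c2 : nb_in L pi2 = q.+1 by apply: (plane_count HLuniq Pl dp2 l2L l3L l23).
have np21 : ~~ (pi2 <= pi1)%VS by apply: contra nl3 => h; exact: subv_trans l3p2 h.
have Uc := lemU (C := fun l => (l <= sg)%VS) (x0 := l2) HLuniq c1 c2
  (fun x _ h => subv_trans h p1sg) (fun x _ h => subv_trans h p2sg).
have U' : {in L, forall x, (x <= sg)%VS -> (x <= pi1)%VS || (x <= pi2)%VS}.
  apply: Uc; last exact: (solid_count Sd dsg).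
  move=> x xL xp1 xp2; exact: (D4 dp2 np21 (dl _ xL) d2 xp2 xp1 l2p2 l2p).
have l4sg : (l4 <= sg)%VS.
  have n43 : P41 != P34 by rewrite eq_sym.
  apply: (two_pts_sub (eqP m41) (eqP m34) n43 d4).
  - exact: capvSl.
  - exact: capvSr.
  - exact: subv_trans (capvSr _ _) (subv_trans l1p p1sg).
  - exact: subv_trans (capvSl _ _) l3sg.
case/orP: (U' l4 l4L l4sg) => h.
  have h1 := B _ _ _ l1L l2L m12 l4L h.
  have h2 : (P12 <= P41)%VS by rewrite subv_cap h1 capvSl.
  by move/negP: n14; apply; apply/eqP; exact: pt_eq (eqP m12) (eqP m41) h2.
have h1 := B _ _ _ l2L l3L m23 l4L h.
have h2 : (P23 <= P34)%VS by rewrite subv_cap capvSr h1.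
by move/negP: n23; apply; apply/eqP; exact: pt_eq (eqP m23) (eqP m34) h2.
Qed.
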